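(* Let $\mathbf{T}\in\{0,1\}^{n\times\ell}$ be a matrix all of whose columns are dirty, with $\delta(\mathbf{T})\le 2$. If $\mathcal{T}_2\neq\emptyset$, then $\ell\le|\mathcal{T}_2|+1$.
   Context: A column of a binary matrix is dirty if it contains both $0$ and $1$. For rows $u,w\in\{0,1\}^\ell$, $D(u,w)=\{j\in[\ell]: u[j]\ne w[j]\}$ and $d(u,w)=|D(u,w)|$ (Hamming distance); $\delta(\mathbf{T})=\max_{i\ne i'}d(\mathbf{T}[i],\mathbf{T}[i'])$, where $\mathbf{T}[i]$ is the $i$-th row. For $x\in\mathbb{N}$, $\mathcal{T}_x$ is the set system (without duplicates) $\{D(\mathbf{T}[i],\mathbf{T}[n]) : i\in[n-1],\ d(\mathbf{T}[i],\mathbf{T}[n])=x\}$. *)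

(* Defs.v *)
From mathcomp Require Import all_boot all_order all_algebra.
Set Implicit Arguments. Unset Strict Implicit. Unset Printing Implicit Defensive.

Definition dirty_col (m l : nat) (T : 'M[bool]_(m, l)) (j : 'I_l) : bool :=
  [exists i, T i j == false] && [exists i, T i j == true].

Definition Dset (m l : nat) (T : 'M[bool]_(m, l)) (i i' : 'I_m) : {set 'I_l} :=
  [set j | T i j != T i' j].

Definition dist (m l : nat) (T : 'M[bool]_(m, l)) (i i' : 'I_m) : nat :=
  #|Dset T i i'|.

Definition delta_le (m l : nat) (T : 'M[bool]_(m, l)) (k : nat) : Prop :=
  forall i i' : 'I_m, i != i' -> dist T i i' <= k.

(* T_x for a matrix with n.+1 rows, the last row being T[n] (= ord_max) *)
Definition Tsys (n l : nat) (T : 'M[bool]_(n.+1, l)) (x : nat) : {set {set 'I_l}} :=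
  [set Dset T i ord_max | i in [set i : 'I_n.+1 | (i != ord_max) && (dist T i ord_max == x)]].

(* Main.v *)
Require Import Defs.
From mathcomp Require Import all_boot all_order all_algebra.
From mathcomp Require Import zify.

Lemma dist_sd m l (T : 'M[bool]_(m, l)) i i' r :
  dist T i i' = #|Dset T i r :\: Dset T i' r| + #|Dset T i' r :\: Dset T i r|.
Proof.
rewrite /dist.
have -> : Dset T i i' = (Dset T i r :\: Dset T i' r) :|: (Dset T i' r :\: Dset T i r).
  by apply/setP => j; rewrite !inE; case: (T i j); case: (T i' j); case: (T r j).
rewrite cardsU.
have -> : (Dset T i r :\: Dset T i' r) :&: (Dset T i' r :\: Dset T i r) = set0.
  by apply/setP => j; rewrite !inE; case: (T i j); case: (T i' j); case: (T r j).
by rewrite cards0 subn0.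
Qed.

Lemma key n l (T : 'M[bool]_(n.+1, l)) i0 i j :
  delta_le T 2 -> dist T i0 ord_max = 2 -> i != ord_max -> i != i0 ->
  j \in Dset T i ord_max -> j \notin Dset T i0 ord_max ->
  #|Dset T i ord_max| = 2 /\ #|Dset T i ord_max :\: Dset T i0 ord_max| <= 1.
Proof.
move=> hd hA hi hii0 hjB hjA.
set A := Dset T i0 ord_max; set B := Dset T i ord_max.
have h1 := hd _ _ hii0. rewrite (@dist_sd _ _ T i i0 ord_max) -/A -/B in h1.
have h2 := hd _ _ hi. rewrite /dist -/B in h2.
have h3 : 0 < #|B :\: A| by apply/card_gt0P; exists j; rewrite inE hjB hjA.
have e1 := cardsID B A. have e2 := cardsID A B. rewrite setIC in e2.
rewrite /dist -/A in hA.
lia.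
Qed.

Theorem lemma9 (n l : nat) (T : 'M[bool]_(n.+1, l)) :
  (forall j : 'I_l, dirty_col T j) ->
  delta_le T 2 ->
  Tsys T 2 != set0 ->
  l <= #|Tsys T 2| + 1.
Proof.
move=> hdirty hd /set0Pn [A0 hA0].
move: (hA0) => /imsetP [i0]; rewrite inE => /andP [hi0 /eqP hdi0] eA0.
set A := Dset T i0 ord_max.
have hAc : #|A| = 2 by [].
have cover : forall j, j \notin A -> exists2 B, B \in Tsys T 2 & (j \in B) && (B != A0).
  move=> j hj.
  have [i hi] : exists i, T i j != T ord_max j.
    move: (hdirty j) => /andP [/existsP [a ha] /existsP [b hb]].
    case e: (T ord_max j).
      by exists a; rewrite (eqP ha).
    by exists b; rewrite (eqP hb).
  have hir : i != ord_max by apply/eqP => e; rewrite e eqxx in hi.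
  have hjB : j \in Dset T i ord_max by rewrite inE.
  have hii0 : i != i0 by apply/eqP => e; move: hj; rewrite /A -e hjB.
  have [k1 _] := @key _ _ T i0 i j hd hdi0 hir hii0 hjB hj.
  exists (Dset T i ord_max).
    by apply/imsetP; exists i => //; rewrite inE hir /dist k1.
  rewrite hjB /= eA0; apply/eqP => e; move: hj; by rewrite /A -e hjB.
pose f j := odflt set0 [pick B in Tsys T 2 | (j \in B) && (B != A0)].
have fP : forall j, j \notin A -> [/\ f j \in Tsys T 2, j \in f j & f j != A0].
  move=> j hj; rewrite /f; case: pickP => [B /andP [h1 /andP [h2 h3]] | h] //=.
  have [B hB hB2] := cover j hj.
  by move: (h B); rewrite hB hB2.
have inj : {in ~: A &, injective f}.
  move=> j j'; rewrite !in_setC => hj hj' e.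
  have [h1 h2 h3] := fP j hj.
  have [h1' h2' h3'] := fP j' hj'.
  move: (h1) => /imsetP [i]; rewrite inE => /andP [hir _] eB.
  have hii0 : i != i0 by apply/eqP => ei; move: h3; rewrite eB eA0 ei eqxx.
  have hjB : j \in Dset T i ord_max by rewrite -eB.
  have [_ k2] := @key _ _ T i0 i j hd hdi0 hir hii0 hjB hj.
  apply/eqP; apply/negPn/negP => hne.
  have : #|[set j; j']| <= #|Dset T i ord_max :\: A|.
    apply: subset_leq_card; apply/subsetP => x; rewrite in_set2 => /orP [] /eqP ->.
      by rewrite in_setD hj hjB.
    by rewrite in_setD hj' -eB e h2'.
  by rewrite cards2 hne => /leq_trans/(_ k2).
have sub : [set f x | x in ~: A] \subset Tsys T 2 :\ A0.
  apply/subsetP => B /imsetP [j]; rewrite in_setC => hj ->.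
  by have [h1 _ h3] := fP j hj; rewrite !inE h1 h3.
have := subset_leq_card sub.
rewrite card_in_imset // (cardsD1 A0 (Tsys T 2)) hA0.
move=> hS; have := cardsC A; rewrite card_ord hAc => hC.
apply: (@leq_trans (2 + #|~: A|)); first by rewrite hC.
by rewrite add1n addn1 add2n ltnS.
Qed.
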